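(* Let $\xi>0$ be real, let $b\ge0$ and $N\ge2$ be integers, and for integers $0\le d\le N-1$ and $0\le l\le 2d$ put \begin{equation*} f_{d,l} = \exp\left(\frac{(2b+1)(d^2+d)\xi}{2N}\right) \cdot 2\sinh\left(\frac{(2d+1)\xi}{2N}\right) \cdot \prod_{k=1}^{l}4 \sinh\left(\frac{(2d+1+k)\xi}{2N}\right) \sinh\left(\frac{(2d+1-k)\xi}{2N}\right). \end{equation*} Then for all integers $l,d$ with $0\le d\le N-2$ and $0\le l\le2d$ we have $f_{d,l}<f_{N-1,l}$. *)

(* Defs.v *)
From Stdlib Require Import Reals.
Open Scope R_scope.

Fixpoint prod_1_to (l : nat) (g : nat -> R) : R :=
  match l with
  | O => 1
  | S l' => prod_1_to l' g * g (S l')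
  end.

Definition f_dl (xi : R) (b N d l : nat) : R :=
  exp ((2 * INR b + 1) * (INR d ^ 2 + INR d) * xi / (2 * INR N))
  * (2 * sinh ((2 * INR d + 1) * xi / (2 * INR N)))
  * prod_1_to l (fun k =>
      4 * sinh ((2 * INR d + 1 + INR k) * xi / (2 * INR N))
        * sinh ((2 * INR d + 1 - INR k) * xi / (2 * INR N))).

(* Main.v *)
Require Import Defs.
From Stdlib Require Import Reals.
From Stdlib Require Import Lra Lia.
Open Scope R_scope.

Lemma sinh_lt' a b : a < b -> sinh a < sinh b.
Proof.
  intros H; unfold sinh.
  assert (exp a < exp b) by (apply exp_increasing; lra).
  assert (exp (- b) < exp (- a)) by (apply exp_increasing; lra).
  lra.
Qed.

Lemma sinh_pos' a : 0 < a -> 0 < sinh a.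
Proof. intros H; rewrite <- sinh_0 at 1. apply sinh_lt'; lra. Qed.

Lemma prod_mono l g h :
  (forall k, (1 <= k <= l)%nat -> 0 < g k <= h k) ->
  0 < prod_1_to l g <= prod_1_to l h.
Proof.
  induction l as [|l IH]; intros H; simpl.
  - lra.
  - assert (A : 0 < prod_1_to l g <= prod_1_to l h) by (apply IH; intros; apply H; lia).
    assert (B : 0 < g (S l) <= h (S l)) by (apply H; lia).
    split; [apply Rmult_lt_0_compat; lra|].
    apply Rmult_le_compat; lra.
Qed.

Theorem corollary3p2 (xi : R) (b N : nat) :
  0 < xi -> (2 <= N)%nat ->
  forall d l : nat, (d <= N - 2)%nat -> (l <= 2 * d)%nat ->
    f_dl xi b N d l < f_dl xi b N (N - 1) l.
Proof.
  intros Hxi HN d l Hd Hl.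
  assert (HNr : 2 <= INR N) by (apply (le_INR 2); exact HN).
  assert (HD : INR (N - 1) = INR N - 1).
  { rewrite minus_INR by lia. simpl. lra. }
  assert (Hdr : INR d + 1 <= INR N - 1).
  { rewrite <- HD. replace (INR d + 1) with (INR (d + 1)) by (rewrite plus_INR; simpl; lra).
    apply le_INR; lia. }
  assert (Hd0 : 0 <= INR d) by apply pos_INR.
  set (c := / (2 * INR N)).
  assert (Hc : 0 < c) by (unfold c; apply Rinv_0_lt_compat; lra).
  assert (arg : forall a a', a <= a' -> a * xi / (2 * INR N) <= a' * xi / (2 * INR N)).
  { intros a a' Ha. unfold Rdiv. fold c. apply Rmult_le_compat_r; [lra|].
    apply Rmult_le_compat_r; lra. }
  assert (argl : forall a a', a < a' -> a * xi / (2 * INR N) < a' * xi / (2 * INR N)).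
  { intros a a' Ha. unfold Rdiv. fold c. apply Rmult_lt_compat_r; [lra|].
    apply Rmult_lt_compat_r; lra. }
  assert (argp : forall a, 0 < a -> 0 < a * xi / (2 * INR N)).
  { intros a Ha. unfold Rdiv. fold c. apply Rmult_lt_0_compat; [|lra].
    apply Rmult_lt_0_compat; lra. }
  unfold f_dl. rewrite HD.
  assert (P := prod_mono l
    (fun k => 4 * sinh ((2 * INR d + 1 + INR k) * xi / (2 * INR N))
        * sinh ((2 * INR d + 1 - INR k) * xi / (2 * INR N)))
    (fun k => 4 * sinh ((2 * (INR N - 1) + 1 + INR k) * xi / (2 * INR N))
        * sinh ((2 * (INR N - 1) + 1 - INR k) * xi / (2 * INR N)))).
  assert (P' : 0 < prod_1_to l
    (fun k => 4 * sinh ((2 * INR d + 1 + INR k) * xi / (2 * INR N))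
        * sinh ((2 * INR d + 1 - INR k) * xi / (2 * INR N))) <= prod_1_to l
    (fun k => 4 * sinh ((2 * (INR N - 1) + 1 + INR k) * xi / (2 * INR N))
        * sinh ((2 * (INR N - 1) + 1 - INR k) * xi / (2 * INR N)))).
  { apply P. intros k Hk.
    assert (Hk1 : INR k <= 2 * INR d).
    { replace (2 * INR d) with (INR (2 * d)) by (rewrite mult_INR; simpl; lra).
      apply le_INR; lia. }
    assert (Hk0 : 0 <= INR k) by apply pos_INR.
    assert (s1 : 0 < sinh ((2 * INR d + 1 + INR k) * xi / (2 * INR N)))
      by (apply sinh_pos'; apply argp; lra).
    assert (s2 : 0 < sinh ((2 * INR d + 1 - INR k) * xi / (2 * INR N)))
      by (apply sinh_pos'; apply argp; lra).
    assert (t1 : sinh ((2 * INR d + 1 + INR k) * xi / (2 * INR N)) <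
                 sinh ((2 * (INR N - 1) + 1 + INR k) * xi / (2 * INR N)))
      by (apply sinh_lt'; apply argl; lra).
    assert (t2 : sinh ((2 * INR d + 1 - INR k) * xi / (2 * INR N)) <
                 sinh ((2 * (INR N - 1) + 1 - INR k) * xi / (2 * INR N)))
      by (apply sinh_lt'; apply argl; lra).
    split.
    - apply Rmult_lt_0_compat; [|lra]. apply Rmult_lt_0_compat; lra.
    - apply Rmult_le_compat; try lra;
        try (apply Rmult_le_pos; lra); try (apply Rmult_le_compat_l; lra). }
  destruct P' as [P1 P2].
  revert P1 P2.
  generalize (prod_1_to l
    (fun k => 4 * sinh ((2 * (INR N - 1) + 1 + INR k) * xi / (2 * INR N))
        * sinh ((2 * (INR N - 1) + 1 - INR k) * xi / (2 * INR N)))) as p2.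
  generalize (prod_1_to l
    (fun k => 4 * sinh ((2 * INR d + 1 + INR k) * xi / (2 * INR N))
        * sinh ((2 * INR d + 1 - INR k) * xi / (2 * INR N)))) as p1.
  intros p1 p2 P1 P2.
  assert (E : exp ((2 * INR b + 1) * (INR d ^ 2 + INR d) * xi / (2 * INR N)) <
              exp ((2 * INR b + 1) * ((INR N - 1) ^ 2 + (INR N - 1)) * xi / (2 * INR N))).
  { apply exp_increasing. apply argl.
    assert (0 <= INR b) by apply pos_INR.
    apply Rmult_lt_compat_l; [lra|].
    assert ((INR d + 1) * (INR d + 1) <= (INR N - 1) * (INR N - 1))
      by (apply Rmult_le_compat; lra).
    simpl; rewrite !Rmult_1_r; nra. }
  assert (E0 : 0 < exp ((2 * INR b + 1) * (INR d ^ 2 + INR d) * xi / (2 * INR N)))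
    by apply exp_pos.
  assert (S1 : 0 < sinh ((2 * INR d + 1) * xi / (2 * INR N)))
    by (apply sinh_pos'; apply argp; lra).
  assert (S2 : sinh ((2 * INR d + 1) * xi / (2 * INR N)) <
               sinh ((2 * (INR N - 1) + 1) * xi / (2 * INR N)))
    by (apply sinh_lt'; apply argl; lra).
  apply Rle_lt_trans with
   (exp ((2 * INR b + 1) * (INR d ^ 2 + INR d) * xi / (2 * INR N)) *
    (2 * sinh ((2 * INR d + 1) * xi / (2 * INR N))) * p2).
  - apply Rmult_le_compat_l; [|lra]. apply Rmult_le_pos; lra.
  - apply Rmult_lt_compat_r; [lra|].
    apply Rmult_le_0_lt_compat; lra.
Qed.
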